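(* Let $G$ be a simple graph with $n$ vertices, let $S(G)$ be its Seidel matrix, and let $\theta_1,\ldots,\theta_n$ be the eigenvalues of $S(G)$. Then the following are equivalent: (i) $|\det S(G)|\ge n-1$; (ii) for every $\alpha$ with $0<\alpha<2$, $$|\theta_1|^\alpha+\cdots+|\theta_n|^\alpha\ge (n-1)^\alpha+(n-1).$$
   Context: For a simple graph $G$ with vertex set $\{v_1,\ldots,v_n\}$, the Seidel matrix $S(G)=(s_{ij})$ is the $n\times n$ matrix with $s_{ii}=0$ for all $i$, and for $i\ne j$, $s_{ij}=-1$ if $v_i$ and $v_j$ are adjacent and $s_{ij}=1$ otherwise. It is a real symmetric matrix, so its eigenvalues are real. *)

(* Defs.v *)
From HB Require Import structures.
From mathcomp Require Import all_boot all_order all_algebra.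
From mathcomp Require Import all_classical all_reals all_analysis.
Set Implicit Arguments. Unset Strict Implicit. Unset Printing Implicit Defensive.
Import Order.TTheory GRing.Theory Num.Theory.
Local Open Scope ring_scope.

Definition simple_graph (n : nat) (e : rel 'I_n) : Prop :=
  irreflexive e /\ symmetric e.

Definition seidel_mx (R : numDomainType) (n : nat) (e : rel 'I_n) : 'M[R]_n :=
  \matrix_(i, j) (if i == j then 0 else if e i j then -1 else 1).

(* theta is the list of eigenvalues (with multiplicity) of the square matrix A:
   the characteristic polynomial of A splits as prod_i (X - theta_i). *)
Definition eigenvalues_of (R : numDomainType) (n : nat) (A : 'M[R]_n)
  (theta : 'I_n -> R) : Prop :=
  char_poly A = \prod_(i < n) ('X - (theta i)%:P).

(* Main.v *)
Require Import Defs.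
From HB Require Import structures.
From mathcomp Require Import all_boot all_order all_algebra.
From mathcomp Require Import all_classical all_reals all_analysis.
Import Order.TTheory GRing.Theory Num.Theory.
Local Open Scope ring_scope.
From mathcomp Require Import ring lra.
Section Ana.
Variable R : realType.
Implicit Types a c d s x y : R.

Definition phi a c d s : R := expR (a*s) - 1 - c*s - d*(expR s - 1).
Definition psi a c d s : R := a * expR (a*s) - c - d * expR s.
Definition psi2 a d s : R := a^+2 * expR (a*s) - d * expR s.

Lemma der_phi a c d x : is_derive x 1 (phi a c d) (psi a c d x).
Proof.
rewrite /phi /psi; apply: trigger_derive.
rewrite /GRing.scale /= !mulr1 !subr0; ring.
Qed.

Lemma der_psi a c d x : is_derive x 1 (psi a c d) (psi2 a d x).
Proof.
rewrite /psi /psi2; apply: trigger_derive.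
rewrite /GRing.scale /= !mulr1 ?subr0; ring.
Qed.

Lemma mvt (f df : R -> R) x y : (forall z : R, is_derive z (1:R) f (df z)) -> x < y ->
  exists2 z, x < z < y & f y - f x = df z * (y - x).
Proof.
move=> h xy.
have [|z zi e] := MVT xy (fun z _ => h z).
  apply: (@continuous_subspaceT _ R^o) => t.
  by apply/differentiable_continuous/derivable1_diffP; exact: ex_derive.
by exists z => //; move: zi; rewrite in_itv.
Qed.

Lemma incr (f df : R -> R) x y : (forall z : R, is_derive z (1:R) f (df z)) -> x <= y ->
  (forall z, x < z < y -> 0 <= df z) -> f x <= f y.
Proof.
move=> h; rewrite le_eqVlt => /predU1P[-> //|xy] hd.
have [z zi e] := @mvt f df x y h xy.
rewrite -subr_ge0 e mulr_ge0 // ?hd // subr_ge0 ltW //.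
Qed.

Lemma decr (f df : R -> R) x y : (forall z : R, is_derive z (1:R) f (df z)) -> x <= y ->
  (forall z, x < z < y -> df z <= 0) -> f y <= f x.
Proof.
move=> h; rewrite le_eqVlt => /predU1P[-> //|xy] hd.
have [z zi e] := @mvt f df x y h xy.
rewrite -subr_le0 e mulr_le0_ge0 // ?hd // subr_ge0 ltW //.
Qed.


Arguments incr {f df x y}.
Arguments decr {f df x y}.

Lemma psi2_sign a d eta s : 0 < a < 1 -> psi2 a d eta = 0 ->
  (s <= eta -> 0 <= psi2 a d s) /\ (eta <= s -> psi2 a d s <= 0).
Proof.
case/andP=> a0 a1 h.
have eS t : expR t = expR (a * t) * expR ((1 - a) * t).
  by rewrite -expRD; congr expR; ring.
have hd : a ^+ 2 = d * expR ((1 - a) * eta).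
  have h' : a ^+ 2 * expR (a * eta) = d * expR eta.
    by apply/eqP; rewrite -subr_eq0; apply/eqP; exact: h.
  apply: (mulIf (lt0r_neq0 (expR_gt0 (a * eta)))).
  by rewrite h' -mulrA (mulrC (expR ((1 - a) * eta))) -eS.
have dpos : 0 < d.
  have : 0 < d * expR ((1 - a) * eta) by rewrite -hd exprn_gt0.
  by rewrite pmulr_lgt0 // expR_gt0.
have e2 : psi2 a d s = d * expR (a * s) * (expR ((1 - a) * eta) - expR ((1 - a) * s)).
  by rewrite /psi2 hd (eS s); ring.
have pp : 0 < d * expR (a * s) by rewrite mulr_gt0 // expR_gt0.
have a1' : 0 < 1 - a by rewrite subr_gt0.
split => hs; rewrite e2.
  rewrite pmulr_rge0 // subr_ge0 ler_expR ler_pM2l //.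
rewrite pmulr_rle0 // subr_le0 ler_expR ler_pM2l //.
Qed.

Lemma key a c d L : 0 < a < 1 -> 0 < L -> c + d = a -> phi a c d L = 0 ->
  forall s, s <= L -> 0 <= phi a c d s.
Proof.
move=> ha L0 cd phiL.
have phi0 : phi a c d 0 = 0 by rewrite /phi !mulr0 expR0; ring.
have psi0 : psi a c d 0 = 0 by rewrite /psi !mulr0 expR0 -cd; ring.
have [xi /andP[xi0 xiL] exi] := @mvt _ _ 0 L (der_phi a c d) L0.
have psixi : psi a c d xi = 0.
  by move: exi; rewrite phiL phi0 subrr subr0 => /esym/eqP; rewrite mulf_eq0 (gt_eqF L0) orbF => /eqP.
have [eta /andP[eta0 etaxi] eeta] := @mvt _ _ 0 xi (der_psi a c d) xi0.
have psi2eta : psi2 a d eta = 0.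
  by move: eeta; rewrite psixi psi0 subrr subr0 => /esym/eqP; rewrite mulf_eq0 (gt_eqF xi0) orbF => /eqP.
have sg s := @psi2_sign a d eta s ha psi2eta.
have Dpsi := der_psi a c d.
have Dphi := der_phi a c d.
have psi_neg s : s <= 0 -> psi a c d s <= 0.
  move=> s0; rewrite -psi0;  apply: (incr Dpsi s0) => z /andP[_ z0].
  by apply: (proj1 (sg z)); rewrite ltW // (lt_trans z0 eta0).
have psi_pos s : 0 <= s <= xi -> 0 <= psi a c d s.
  case/andP=> s0 sxi; case: (leP s eta) => se.
    rewrite -psi0; apply: (incr Dpsi s0) => z /andP[_ zs].
    by apply: (proj1 (sg z)); rewrite ltW // (lt_le_trans zs se).
  rewrite -psixi; apply: (decr Dpsi sxi) => z /andP[zs _].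
  by apply: (proj2 (sg z)); rewrite ltW // (lt_trans se zs).
have psi_neg2 s : xi <= s -> psi a c d s <= 0.
  move=> xis; rewrite -psixi; apply: (decr Dpsi xis) => z /andP[zs _].
  by apply: (proj2 (sg z)); rewrite ltW // (lt_trans etaxi zs).
move=> s sL.
case: (leP s 0) => s0.
  rewrite -phi0; apply: (decr Dphi s0) => z /andP[_ z0].
  by apply: psi_neg; rewrite ltW.
case: (leP s xi) => sxi.
  rewrite -phi0; apply: (incr Dphi (ltW s0)) => z /andP[z0 zs].
  by apply: psi_pos; apply/andP; split; apply: ltW => //; exact: lt_le_trans zs sxi.
rewrite -phiL; apply: (decr Dphi sL) => z /andP[zs _].
by apply: psi_neg2; rewrite ltW // (lt_trans sxi zs).
Qed.

Lemma c_ge0 a c d L : 0 < a < 1 -> 0 < L -> (forall s, s <= L -> 0 <= phi a c d s) -> 0 <= c.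
Proof.
move=> /andP[a0 a1] L0 h; rewrite leNgt; apply/negP => c0.
pose s := (2 * `|d| + 1) / c.
have s0 : s < 0 by rewrite /s ltr_ndivrMr // mul0r; have := normr_ge0 d; lra.
have := h s (le_trans (ltW s0) (ltW L0)).
have cs : c * s = 2 * `|d| + 1 by rewrite /s mulrC divfK // ltr0_neq0.
have e1 : expR (a * s) <= 1 by rewrite -expR0 ler_expR; apply: ltW; rewrite pmulr_rlt0.
have e2 : expR s <= 1 by rewrite -expR0 ler_expR ltW.
have e3 : - d * expR s <= `|d|.
  rewrite (le_trans (ler_norm _)) // normrM normrN (ger0_norm (expR_ge0 _)).
  by rewrite ler_piMr.
have : d <= `|d| := ler_norm d.
rewrite /phi; lra.
Qed.


Lemma expR_ub (x : R) : x <= 1/2 -> expR x <= 1 + x + 2 * x ^+ 2.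
Proof.
move=> hx.
have x1 : 0 < 1 - x by lra.
have h1 : expR x * (1 - x) <= 1.
  have := expR_ge1Dx (- x); rewrite expRN => h.
  have ep := expR_gt0 x.
  by rewrite -[X in _ <= X](divff (lt0r_neq0 ep)) ler_pM2l.
rewrite -(ler_pM2r x1); apply: (le_trans h1).
have : 0 <= x ^+ 2 * (1 - 2 * x) by rewrite mulr_ge0 ?sqr_ge0 //; lra.
move=> h; rewrite -subr_ge0; apply: le_trans h _; rewrite le_eqVlt; apply/orP; left; apply/eqP; ring.
Qed.

Lemma sq_bound n (th : 'I_n -> R) : (2 <= n)%N -> \sum_i th i = 0 ->
  \sum_i th i ^+ 2 = (n * (n - 1))%:R -> forall i, th i ^+ 2 <= ((n - 1)%:R) ^+ 2.
Proof.
move=> n2 s1 s2 i.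
set m : R := (n - 1)%:R.
have hn : n%:R = m + 1 by rewrite /m natrB ?subrK // (leq_trans _ n2).
have m1 : 1 <= m by rewrite /m ler1n subn_gt0.
have H : \sum_j (m * th j + th i) ^+ 2 = m ^+ 2 * \sum_j th j ^+ 2 + 2 * m * th i * \sum_j th j + n%:R * th i ^+ 2.
  transitivity (\sum_j (m ^+ 2 * th j ^+ 2 + 2 * m * th i * th j + th i ^+ 2)).
    by apply: eq_bigr => j _; ring.
  by rewrite !big_split /= -!mulr_sumr sumr_const card_ord -mulr_natl; ring.
have : (m * th i + th i) ^+ 2 <= \sum_j (m * th j + th i) ^+ 2.
  by rewrite (bigD1 i) //= lerDl; apply: sumr_ge0 => j _; exact: sqr_ge0.
rewrite H s1 s2 mulr0 addr0 natrM hn -/m => h.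
have p : 0 < (m + 1) * m by rewrite mulr_gt0 //; lra.
suff : (m + 1) * m * (th i ^+ 2 - m ^+ 2) <= 0.
  by rewrite pmulr_rle0 // subr_le0.
have e : (m + 1) * m * (th i ^+ 2 - m ^+ 2) = (m * th i + th i) ^+ 2 - (m ^+ 2 * ((m + 1) * m) + (m + 1) * th i ^+ 2) by ring.
by rewrite e subr_le0.
Qed.


Lemma ex_cd (a L : R) : 0 < L -> exists c d, c + d = a /\ phi a c d L = 0.
Proof.
move=> L0.
have hL : expR L - 1 - L != 0.
  by have := expR_gt1Dx (lt0r_neq0 L0); rewrite -subr_gt0 => h; rewrite lt0r_neq0 //; lra.
exists ((1 + a * (expR L - 1) - expR (a * L)) / (expR L - 1 - L)).
exists (a - (1 + a * (expR L - 1) - expR (a * L)) / (expR L - 1 - L)).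
split; first by ring.
rewrite /phi; field => //.
Qed.

Lemma dir1 n (th : 'I_n -> R) : (3 <= n)%N -> \sum_i th i = 0 ->
  \sum_i th i ^+ 2 = (n * (n - 1))%:R -> (n - 1)%:R <= `|\prod_i th i| ->
  forall alpha : R, 0 < alpha -> alpha < 2 ->
  ((n - 1)%:R) `^ alpha + (n - 1)%:R <= \sum_i `|th i| `^ alpha.
Proof.
move=> n3 s1 s2 hdet alpha al0 al2.
have sqb := @sq_bound n th (leq_trans (isT : (2 <= 3)%N) n3) s1 s2.
set m : R := (n - 1)%:R in sqb hdet *.
have hn : n%:R = m + 1 by rewrite /m natrB ?subrK // (leq_trans _ n3).
have m2 : 2 <= m by rewrite /m (ler_nat R 2) leq_subRL ?(leq_trans _ n3).
have thn0 i : th i != 0.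
  apply/eqP => h0; move: hdet; rewrite (bigD1 i) //= h0 mul0r normr0; lra.
set l := ln m.
have ml : expR l = m by rewrite /l lnK // posrE; lra.
have l0 : 0 < l by apply: ln_gt0; lra.
set a := alpha / 2.
have ha : 0 < a < 1 by apply/andP; split; rewrite /a; lra.
set L := 2 * l.
have L0 : 0 < L by rewrite /L; lra.
have eL : expR L = m ^+ 2.
  by rewrite /L (_ : 2 * l = l + l) ?expRD ?ml ?expr2 //; ring.
have [c [d [cd phiL]]] := @ex_cd a L L0.
have hphi := @key a c d L ha L0 cd phiL.
have c0 := @c_ge0 a c d L ha L0 hphi.
have eml : m `^ alpha = expR (a * L).
  rewrite /powR (negbTE (_ : m != 0)); last by rewrite gt_eqF //; lra.
  by congr expR; rewrite /a /L -/l; field.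
have term i : 1 + c * (2 * ln `|th i|) + d * (th i ^+ 2 - 1) <= `|th i| `^ alpha.
  set u := ln `|th i|.
  have tp : 0 < `|th i| by rewrite normr_gt0.
  have eu : expR u = `|th i| by rewrite /u lnK // posrE.
  have e2 : expR (2 * u) = th i ^+ 2.
    by rewrite (_ : 2 * u = u + u) ?expRD ?eu -?expr2 ?real_normK ?num_real //; ring.
  have su : 2 * u <= L by rewrite -ler_expR e2 eL; exact: sqb.
  have := hphi _ su; rewrite /phi e2.
  have -> : `|th i| `^ alpha = expR (a * (2 * u)).
    by rewrite /powR (negbTE (lt0r_neq0 tp)) /a; congr expR; rewrite -/u; field.
  lra.
have hsum : \sum_i (1 + c * (2 * ln `|th i|) + d * (th i ^+ 2 - 1)) <= \sum_i `|th i| `^ alpha by apply: ler_sum => i _; exact: term.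
set U := \sum_i ln `|th i|.
have e : \sum_i (1 + c * (2 * ln `|th i|) + d * (th i ^+ 2 - 1)) =
    n%:R + c * (2 * U) + d * (\sum_i th i ^+ 2 - n%:R).
  rewrite big_split big_split /= -mulr_sumr -mulr_sumr -mulr_sumr sumrB sumr_const card_ord.
  by rewrite /U.
have hU : l <= U.
  rewrite -ler_expR ml /U (big_morph _ (@expRD R) (@expR0 R)).
  under eq_bigr do rewrite lnK ?posrE ?normr_gt0 //.
  by rewrite -normr_prod.
rewrite e s2 natrM -/m hn in hsum.
rewrite eml.
have hc : c * L <= c * (2 * U) by rewrite ler_wpM2l // /L; lra.
move: phiL; rewrite /phi eL => phiL.
have ed : d * (m ^+ 2 - 1) = d * ((m + 1) * m - (m + 1)) by ring.
lra.
Qed.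

Lemma dir2 n (th : 'I_n -> R) : (2 <= n)%N ->
  (forall alpha : R, 0 < alpha -> alpha < 2 ->
    ((n - 1)%:R) `^ alpha + (n - 1)%:R <= \sum_i `|th i| `^ alpha) ->
  (n - 1)%:R <= `|\prod_i th i|.
Proof.
move=> n2 hii.
set m : R := (n - 1)%:R in hii *.
have hn : n%:R = m + 1 by rewrite /m natrB ?subrK // (leq_trans _ n2).
have m1 : 1 <= m by rewrite /m ler1n subn_gt0.
rewrite leNgt; apply/negP => hlt.
set l := ln m.
have ml : expR l = m by rewrite /l lnK // posrE; lra.
pose w i := if th i == 0 then 0 else ln `|th i|.
set W := \sum_i w i.
set Q := \sum_i w i ^+ 2.
set K := 1 + \sum_i `|w i| + `|W - l| + 2 * Q.
have Q0 : 0 <= Q by apply: sumr_ge0 => i _; exact: sqr_ge0.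
have A0 : 0 <= \sum_i `|w i| by apply: sumr_ge0 => i _.
have K1 : 1 <= K by rewrite /K; have := normr_ge0 (W - l); lra.
have wK i : `|w i| <= K.
  have : `|w i| <= \sum_i `|w i| by rewrite (bigD1 i) //= lerDl; apply: sumr_ge0.
  by rewrite /K; have := normr_ge0 (W - l); lra.
pose Z := \sum_i ((th i == 0)%:R : R).
have bound alpha : 0 < alpha -> alpha * K <= 1/2 ->
    Z + alpha * (l - W) <= 2 * alpha ^+ 2 * Q.
  move=> a0 aK.
  have a2 : alpha < 2.
    have : alpha <= alpha * K by rewrite ler_peMr // ltW.
    lra.
  have h1 := hii alpha a0 a2.
  have h2 : 1 + alpha * l + m <= m `^ alpha + m.
    rewrite /powR (negbTE (_ : m != 0)); last by rewrite gt_eqF //; lra.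
    rewrite lerD2r -/l mulrC; exact: expR_ge1Dx.
  have term i : `|th i| `^ alpha <= 1 + alpha * w i + 2 * alpha ^+ 2 * w i ^+ 2 - (th i == 0)%:R.
    rewrite /w; case: eqP => [->|/eqP ne].
      by rewrite normr0 powR0 ?gt_eqF // mulr0 expr0n /= mulr0 !addr0 subrr.
    rewrite subr0 /powR normr_eq0 (negbTE ne).
    have : alpha * ln `|th i| <= 1/2.
      apply: le_trans aK; apply: le_trans (ler_norm _) _.
      rewrite normrM (gtr0_norm a0) ler_pM2l //.
      by have := wK i; rewrite /w (negbTE ne).
    move/expR_ub; rewrite exprMn; lra.
  have hs : \sum_i `|th i| `^ alpha <= \sum_i (1 + alpha * w i + 2 * alpha ^+ 2 * w i ^+ 2 - (th i == 0)%:R).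
    by apply: ler_sum => i _; exact: term i.
  have e : \sum_i (1 + alpha * w i + 2 * alpha ^+ 2 * w i ^+ 2 - (th i == 0)%:R) =
      n%:R + alpha * W + 2 * alpha ^+ 2 * Q - Z.
    rewrite sumrB big_split big_split /= -mulr_sumr -mulr_sumr sumr_const card_ord.
    by rewrite /W /Q /Z.
  rewrite e hn in hs.
  lra.
have [j hj|] := pickP (fun i => th i == 0).
- have Z1 : 1 <= Z.
    rewrite /Z (bigD1 j) //= hj lerDl; apply: sumr_ge0 => i _; exact: ler0n.
  pose alpha := (2 * K)^-1.
  have a0 : 0 < alpha by rewrite /alpha invr_gt0; lra.
  have aK : alpha * K = 1/2 by rewrite /alpha; field; lra.
  have := bound alpha a0 (_ : alpha * K <= 1/2); rewrite aK lexx => /(_ isT).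
  have h1 : alpha * `|W - l| <= 1/2 by rewrite -aK ler_pM2l // /K; lra.
  have h2 : alpha * (2 * Q) <= 1/2 by rewrite -aK ler_pM2l // /K; have := normr_ge0 (W - l); lra.
  have h3 : - `|W - l| <= l - W by rewrite lerNl opprB ler_norm.
  have h4 : alpha * (- `|W - l|) <= alpha * (l - W) by rewrite ler_pM2l.
  have h5 : alpha <= 1/2 by rewrite -aK ler_peMr // ltW.
  have h6 : 2 * alpha ^+ 2 * Q = alpha * (alpha * (2 * Q)) by ring.
  have h7 : alpha * (alpha * (2 * Q)) <= alpha * (1/2) by rewrite ler_pM2l.
  have h8 : alpha * (- `|W - l|) = - (alpha * `|W - l|) by ring.
  lra.
- move=> nz.
  have W_l : W < l.
    rewrite -ltr_expR ml /W (big_morph _ (@expRD R) (@expR0 R)).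
    under eq_bigr => i _ do rewrite /w (negbTE (negbT (nz i))) lnK ?posrE ?normr_gt0 ?(negbT (nz i)) //.
    by rewrite -normr_prod.
  have Z0 : Z = 0 by rewrite /Z big1 // => i _; rewrite (negbTE (negbT (nz i))).
  set g := l - W.
  have g0 : 0 < g by rewrite /g subr_gt0.
  pose t := g / (2 * (g + 1)).
  have t0 : 0 < t by rewrite /t divr_gt0 //; lra.
  have tg : t < g.
    rewrite /t ltr_pdivrMr; last lra.
    have : 0 < g * g by rewrite mulr_gt0.
    lra.
  have th2 : t <= 1/2.
    rewrite /t ler_pdivrMr; last lra.
    lra.
  pose alpha := t / K.
  have a0 : 0 < alpha by rewrite /alpha divr_gt0 //; lra.
  have aK : alpha * K = t by rewrite /alpha divfK // gt_eqF //; lra.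
  have := bound alpha a0 (_ : alpha * K <= 1/2); rewrite aK th2 => /(_ isT).
  rewrite Z0 add0r -/g.
  have h2 : alpha * (2 * Q) <= t by rewrite -aK ler_pM2l // /K; have := normr_ge0 (W - l); lra.
  have h6 : 2 * alpha ^+ 2 * Q = alpha * (alpha * (2 * Q)) by ring.
  rewrite h6 ler_pM2l // => h.
  lra.
Qed.

End Ana.
Section LA.
Variable R : realType.
Variable n : nat.

Lemma horner_charp (A : 'M[R]_n) a : (char_poly A).[a] = \det (a%:M - A).
Proof.
rewrite horner_sum; apply: eq_bigr => s _.
rewrite hornerM horner_exp !hornerE; congr (_ * _).
rewrite (big_morph _ (fun p q => hornerM p q a) (hornerC 1 a)).
by apply: eq_bigr => i _; rewrite !mxE !(hornerE, hornerMn).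
Qed.

Lemma prod_seqE (theta : 'I_n -> R) :
  \prod_(i < n) ('X - (theta i)%:P) = \prod_(p <- [seq theta i | i <- enum 'I_n]) ('X - p%:P).
Proof. by rewrite big_map big_enum. Qed.

Lemma eig_det (A : 'M[R]_n) theta : char_poly A = \prod_(i < n) ('X - (theta i)%:P) ->
  \det A = \prod_(i < n) theta i.
Proof.
move=> h; have := horner_charp A 0.
have -> : (scalar_mx 0 : 'M[R]_n) = 0 by apply/matrixP => i j; rewrite !mxE mul0rn.
rewrite h horner_prod sub0r -scaleN1r detZ.
under eq_bigr do rewrite hornerXsubC sub0r.
rewrite prodrN card_ord => e.
apply: (mulfI (_ : (-1) ^+ n != 0 :> R)); first by rewrite expf_neq0 // oppr_eq0 oner_eq0.
by rewrite -e.
Qed.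

Lemma eig_trace (A : 'M[R]_n) theta : (0 < n)%N -> char_poly A = \prod_(i < n) ('X - (theta i)%:P) ->
  \sum_(i < n) theta i = \tr A.
Proof.
move=> n0 h; have := char_poly_trace A n0.
rewrite h prod_seqE.
set ps := [seq theta i | i <- enum 'I_n].
have sz : size ps = n by rewrite size_map size_enum_ord.
have := @coefPn_prod_XsubC _ ps; rewrite sz -lt0n => /(_ n0) ->.
move/eqP; rewrite eqr_opp => /eqP <-.
by rewrite big_map big_enum.
Qed.


Lemma eig_sq (A : 'M[R]_n) theta : char_poly A = \prod_(i < n) ('X - (theta i)%:P) ->
  char_poly (A *m A) = \prod_(i < n) ('X - (theta i ^+ 2)%:P).
Proof.
move=> h.
have ev x : (char_poly (A *m A)).[x ^+ 2] = (\prod_(i < n) ('X - (theta i ^+ 2)%:P)).[x ^+ 2].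
  rewrite horner_charp horner_prod.
  have -> : (x ^+ 2)%:M - A *m A = (x%:M - A) *m (x%:M + A).
    by rewrite mulmxBl !mulmxDr -scalar_mxM scalar_mxC expr2 opprD addrA addrK.
  rewrite det_mulmx -horner_charp.
  have -> : x%:M + A = (-1) *: ((- x)%:M - A).
    by rewrite scaleN1r opprB raddfN /= opprK addrC.
  rewrite detZ -horner_charp h !horner_prod.
  under [X in _ * (_ * X)]eq_bigr do rewrite hornerXsubC -opprD.
  rewrite prodrN card_ord [X in _ * X]mulrA -exprMn mulrNN mulr1 expr1n mul1r -big_split /=.
  by apply: eq_bigr => i _; rewrite !hornerXsubC; ring.
set p := char_poly (A *m A) - \prod_(i < n) ('X - (theta i ^+ 2)%:P).
suff : p = 0 by move/eqP; rewrite subr_eq0 => /eqP.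
apply: (@roots_geq_poly_eq0 _ _ [seq (k%:R : R) ^+ 2 | k <- iota 0 (size p)]).
- by apply/allP => y /mapP [k _ ->]; rewrite rootE /p hornerD hornerN ev subrr.
- rewrite map_inj_uniq ?iota_uniq // => k m; rewrite -!natrX => /eqP.
  by rewrite eqr_nat eqn_exp2r // => /eqP.
- by rewrite size_map size_iota.
Qed.

End LA.

Lemma sum_ord2 (R : realType) (F : 'I_2 -> R) : \sum_i F i = F ord0 + F ord_max.
Proof. by rewrite !big_ord_recl big_ord0 addr0; congr (_ + F _); exact: val_inj. Qed.

Theorem theorem1p1 (R : realType) (n : nat) (e : rel 'I_n)
  (hn : (0 < n)%N) (hG : simple_graph e)
  (theta : 'I_n -> R) (htheta : eigenvalues_of (seidel_mx R e) theta) :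
  (`|\det (seidel_mx R e)| >= (n - 1)%:R) <->
  (forall alpha : R, 0 < alpha -> alpha < 2 ->
     \sum_(i < n) `|theta i| `^ alpha >= ((n - 1)%:R) `^ alpha + (n - 1)%:R).
Proof.
have hdet := @eig_det R n _ theta htheta.
rewrite hdet.
have [n1|n2] : n = 1%N \/ (2 <= n)%N.
  by case: n hn {e hG theta htheta hdet} => [|[|k]] //; [left|right].
  subst n; rewrite subnn; split => _.
    move=> alpha a0 _; rewrite powR0 ?gt_eqF // addr0.
    by apply: sumr_ge0 => i _; exact: powR_ge0.
  exact: normr_ge0.
set S := seidel_mx R e.
have tr0 : \tr S = 0 by rewrite /mxtrace big1 // => i _; rewrite mxE eqxx.
have s1 : \sum_i theta i = 0 by rewrite (@eig_trace R n _ theta hn htheta).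
have inner i : \sum_j S i j * S j i = (n - 1)%:R.
  rewrite (bigD1 i) //= !mxE eqxx mul0r add0r.
  rewrite (eq_bigr (fun _ => 1)); last first.
    move=> j ji; rewrite !mxE [i == j]eq_sym (negbTE ji) (proj2 hG j i).
    by case: (e i j); rewrite ?mulrNN mulr1.
  by rewrite sumr_const cardC1 card_ord subn1.
have s2 : \sum_i theta i ^+ 2 = (n * (n - 1))%:R.
  rewrite (@eig_trace R n _ _ hn (@eig_sq R n _ theta htheta)) /mxtrace.
  under eq_bigr do rewrite mxE inner.
  by rewrite sumr_const card_ord natrM mulr_natl.
have [n2'|n3] : n = 2%N \/ (3 <= n)%N.
  by case: n n2 {hn e hG theta htheta hdet S tr0 s1 inner s2} => [|[|[|k]]] //; [left|right].
  subst n; split; last exact: dir2.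
  move=> _ alpha a0 a2.
  have sqb := @sq_bound R 2 theta isT s1 s2.
  move: s2 (sqb ord0) (sqb ord_max); rewrite sum_ord2 => s2 b0 b1.
  have E1 : (2 - 1)%N = 1%N by [].
  have E2 : (2 * (2 - 1))%N = 2%N by [].
  rewrite E2 in s2; rewrite E1 mulr1n expr1n in b0 b1; rewrite E1 mulr1n.
  have e0 : theta ord0 ^+ 2 = 1 by clear -s2 b0 b1; lra.
  have e1 : theta ord_max ^+ 2 = 1 by clear -s2 b0 b1; lra.
  move/eqP: e0; rewrite sqr_norm_eq1 => e0.
  move/eqP: e1; rewrite sqr_norm_eq1 => e1.
  have p1 : 1 `^ alpha = 1 :> R by rewrite powR1.
  rewrite sum_ord2 (eqP e0) (eqP e1) p1.
  by rewrite lexx.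
split; first exact: dir1.
exact: dir2.
Qed.
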